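(* Let $1\le p<\infty$ and let $f\in BV_p[0,1]$ take values in $[0,1]$. For every $\varepsilon>0$ there exists $\eta>0$ such that whenever $0\le x_1<x_2<\dots<x_m\le1$ and $f(x_j)<\eta$ for all $j=1,\dots,m$, one has $\left(\sum_{j=1}^{m-1}|f(x_{j+1})-f(x_j)|^p\right)^{1/p}<\varepsilon$.
   Context: For $1\le p<\infty$, $BV_p[0,1]$ is the set of functions $f:[0,1]\to\mathbb F$ ($\mathbb F\in\{\mathbb R,\mathbb C\}$) with finite total Wiener $p$-variation $\operatorname{Var}_p(f,[0,1]):=\sup\sum_{j=1}^m|f(t_j)-f(t_{j-1})|^p$, the supremum over all partitions $0=t_0<t_1<\dots<t_m=1$. *)

(* Defs.v *)
From Stdlib Require Import Reals List Sorted.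
Import ListNotations.
Open Scope R_scope.

(* Real power x^a for x >= 0, with the convention 0^a = 0 (a > 0).
   Stdlib's Rpower 0 a = 1, so we patch the value at 0. *)
Definition rpow (x a : R) : R := if Req_EM_T x 0 then 0 else Rpower x a.

Fixpoint pvar_sum (f : R -> R) (p : R) (l : list R) : R :=
  match l with
  | x :: ((y :: _) as t) => rpow (Rabs (f y - f x)) p + pvar_sum f p t
  | _ => 0
  end.

Definition is_partition01 (l : list R) : Prop :=
  (2 <= length l)%nat /\ Sorted Rlt l /\ hd 1 l = 0 /\ last l 0 = 1.

Definition BV_p (p : R) (f : R -> R) : Prop :=
  exists M : R, forall l, is_partition01 l -> pvar_sum f p l <= M.

(* Main.v *)
Require Import Defs.
From Stdlib Require Import Reals List Sorted Lra Lia Classical.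
Import ListNotations.
Open Scope R_scope.

Lemma rpow_nonneg x a : 0 <= rpow x a.
Proof. unfold rpow; destruct Req_EM_T; [lra|unfold Rpower; left; apply exp_pos]. Qed.

Lemma rpow_0 a : rpow 0 a = 0.
Proof. unfold rpow; destruct Req_EM_T; [reflexivity|lra]. Qed.

Lemma rpow_pos x a : 0 < x -> rpow x a = Rpower x a.
Proof. intro; unfold rpow; destruct Req_EM_T; [lra|reflexivity]. Qed.

Lemma exp_le x y : x <= y -> exp x <= exp y.
Proof. intros [H|H]; [left; apply exp_increasing; auto| subst; lra]. Qed.

Lemma ln_nonpos y : 0 < y <= 1 -> ln y <= 0.
Proof. intros [H1 [H2|H2]]. left; rewrite <- ln_1; apply ln_increasing; auto. subst; rewrite ln_1; lra. Qed.

Lemma Rpower_le_self y p : 0 < y <= 1 -> 1 <= p -> Rpower y p <= y.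
Proof.
  intros Hy Hp. unfold Rpower. pattern y at 2; rewrite <- (exp_ln y) by lra.
  apply exp_le. pose proof (ln_nonpos y Hy). nra.
Qed.

Lemma rpow_mono x y p : 0 <= p -> 0 <= x <= y -> rpow x p <= rpow y p.
Proof.
  intros Hp [[Hx|Hx] Hxy].
  - rewrite !rpow_pos by lra. apply Rle_Rpower_l; lra.
  - subst; rewrite rpow_0; apply rpow_nonneg.
Qed.

Lemma rpow_le_self y p : 0 <= y <= 1 -> 1 <= p -> rpow y p <= y.
Proof.
  intros [[H|H] H1] Hp. rewrite rpow_pos by lra. apply Rpower_le_self; lra.
  subst; rewrite rpow_0; lra.
Qed.

Lemma rpow_lip x y p : 1 <= p -> 0 <= x <= y -> y <= 1 -> rpow y p - rpow x p <= p * (y - x).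
Proof.
  intros Hp [[Hx|Hx] [Hxy|Hxy]] Hy1.
  - rewrite !rpow_pos by lra.
    destruct (MVT_cor2 (fun z => Rpower z p) (fun z => p * Rpower z (p - 1)) x y Hxy)
      as [c [Hc1 Hc2]].
    { intros c Hc. apply derivable_pt_lim_power. lra. }
    rewrite Hc1. apply Rmult_le_compat_r; [lra|].
    assert (Rpower c (p - 1) <= 1).
    { unfold Rpower. replace 1 with (exp 0) at 2 by apply exp_0. apply exp_le.
      assert (0 < c <= 1) by (split; lra). pose proof (ln_nonpos c H). nra. }
    nra.
  - subst; lra.
  - subst. rewrite rpow_0. assert (0 <= y <= 1) by (split; lra). pose proof (rpow_le_self y p H Hp). nra.
  - subst; lra.
Qed.

Definition cr p eta a := rpow (Rmax (a - eta) 0) p.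

Lemma HE1 p eta u v : 1 <= p -> 0 < eta <= 1 -> 0 <= u < eta -> 0 <= v < eta ->
  rpow (Rabs (v - u)) p <= p * eta + eta.
Proof.
  intros Hp He Hu Hv.
  assert (Rabs (v - u) <= eta) by (apply Rabs_le; lra).
  pose proof (rpow_mono (Rabs (v-u)) eta p ltac:(lra) (conj (Rabs_pos _) H)).
  pose proof (rpow_le_self eta p ltac:(lra) Hp). nra.
Qed.

Lemma HE3 p eta a u : 1 <= p -> 0 <= u < eta -> cr p eta a <= rpow (Rabs (u - a)) p.
Proof.
  intros Hp Hu. unfold cr. apply rpow_mono; [lra|]. split.
  unfold Rmax; destruct Rle_dec; lra.
  rewrite Rabs_minus_sym. pose proof (Rle_abs (a - u)). pose proof (Rabs_pos (a-u)).
  unfold Rmax; destruct Rle_dec; lra.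
Qed.

Lemma HE2 p eta a b v : 1 <= p -> 0 < eta <= 1 -> 0 <= a <= 1 -> 0 <= b <= 1 -> 0 <= v < eta ->
  rpow (Rabs (b - a)) p <= cr p eta a + rpow (Rabs (b - v)) p + (p * eta + eta).
Proof.
  intros Hp He Ha Hb Hv.
  pose proof (rpow_nonneg (Rabs (b - v)) p).
  pose proof (rpow_nonneg (Rmax (a - eta) 0) p).
  unfold cr in *.
  destruct (Rle_dec eta a) as [Hea|Hea]; [destruct (Rle_dec b a) as [Hba|Hba]|]; try apply Rnot_le_lt in Hea; try apply Rnot_le_lt in Hba.
  - rewrite Rabs_minus_sym, Rabs_pos_eq by lra.
    replace (Rmax (a - eta) 0) with (a - eta) by (unfold Rmax; destruct Rle_dec; lra).
    pose proof (rpow_mono (a - b) a p ltac:(lra) ltac:(lra)).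
    pose proof (rpow_lip (a - eta) a p Hp ltac:(lra) ltac:(lra)); replace (p * (a - (a - eta))) with (p * eta) in * by ring. lra.
  - destruct (Rle_dec eta b) as [Heb|Heb]; try apply Rnot_le_lt in Heb.
    2: lra.
    rewrite Rabs_pos_eq by lra.
    pose proof (rpow_mono (b - a) b p ltac:(lra) ltac:(lra)).
    pose proof (rpow_lip (b - eta) b p Hp ltac:(lra) ltac:(lra)); replace (p * (b - (b - eta))) with (p * eta) in * by ring.
    assert (Hbv : 0 <= b - eta <= Rabs (b - v)) by (rewrite Rabs_pos_eq by lra; lra).
    pose proof (rpow_mono (b - eta) (Rabs (b - v)) p ltac:(lra) Hbv). lra.
  - destruct (Rle_dec eta b) as [Heb|Heb]; try apply Rnot_le_lt in Heb.
    + rewrite Rabs_pos_eq by lra.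
      pose proof (rpow_mono (b - a) b p ltac:(lra) ltac:(lra)).
      pose proof (rpow_lip (b - eta) b p Hp ltac:(lra) ltac:(lra)); replace (p * (b - (b - eta))) with (p * eta) in * by ring.
      assert (Hbv : 0 <= b - eta <= Rabs (b - v)) by (rewrite Rabs_pos_eq by lra; lra).
      pose proof (rpow_mono (b - eta) (Rabs (b - v)) p ltac:(lra) Hbv). lra.
    + assert (Rabs (b - a) <= eta) by (apply Rabs_le; lra).
      pose proof (rpow_mono (Rabs (b-a)) eta p ltac:(lra) (conj (Rabs_pos _) H1)).
      pose proof (rpow_le_self eta p ltac:(lra) Hp). nra.
Qed.

Definition Ps (l : list (R * bool)) := map fst (filter (fun z => negb (snd z)) l).
Definition Qs (l : list (R * bool)) := map fst (filter (fun z => snd z) l).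
Definition pvs f p (o : option R) s :=
  match o with None => pvar_sum f p s | Some a => pvar_sum f p (a :: s) end.
Definition cred f p eta (lastP : option R) (tag : bool) :=
  match tag, lastP with true, Some a => cr p eta (f a) | _, _ => 0 end.

Lemma Ps_cP y r : Ps ((y,false)::r) = y :: Ps r. Proof. reflexivity. Qed.
Lemma Ps_cQ y r : Ps ((y,true)::r) = Ps r. Proof. reflexivity. Qed.
Lemma Qs_cP y r : Qs ((y,false)::r) = Qs r. Proof. reflexivity. Qed.
Lemma Qs_cQ y r : Qs ((y,true)::r) = y :: Qs r. Proof. reflexivity. Qed.

Lemma pvar_cons2 f p a b s : pvar_sum f p (a :: b :: s) = rpow (Rabs (f b - f a)) p + pvar_sum f p (b :: s).
Proof. reflexivity. Qed.

Lemma pvar_nonneg f p s : 0 <= pvar_sum f p s.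
Proof.
  induction s as [|a s IH]; [simpl; lra|]. destruct s as [|b s]; [simpl; lra|].
  rewrite pvar_cons2. pose proof (rpow_nonneg (Rabs (f b - f a)) p). lra.
Qed.

Lemma pvs_some_cons f p a y s : pvs f p (Some a) (y :: s) = rpow (Rabs (f y - f a)) p + pvs f p (Some y) s.
Proof. reflexivity. Qed.

Lemma inv_main f p eta : 1 <= p -> 0 < eta <= 1 ->
  forall l x tag lastP lastQ,
  (forall z, In z l -> 0 <= f (fst z) <= 1 /\ (snd z = true -> f (fst z) < eta)) ->
  0 <= f x <= 1 ->
  (tag = true -> f x < eta /\ lastQ = Some x) ->
  (tag = false -> lastP = Some x) ->
  (forall a, lastP = Some a -> 0 <= f a <= 1) ->
  (forall q, lastQ = Some q -> 0 <= f q < eta) ->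
  pvs f p lastP (Ps l) + pvs f p lastQ (Qs l) <=
  pvar_sum f p (x :: map fst l) + cred f p eta lastP tag
   + (2 * INR (length (Ps l)) + 1 + (if tag then 0 else 1)) * (p * eta + eta).
Proof.
  intros Hp He. assert (HE : 0 <= p * eta + eta) by nra.
  induction l as [|[y t] r IH]; intros x tag lastP lastQ Hl Hx Ht1 Ht2 HP HQ.
  - assert (0 <= cred f p eta lastP tag) by
      (unfold cred; destruct tag, lastP; try lra; apply rpow_nonneg).
    destruct lastP, lastQ; destruct tag; simpl in *; nra.
  - assert (Hy := Hl (y, t) (or_introl eq_refl)). simpl fst in Hy. simpl snd in Hy.
    assert (Hr : forall z, In z r -> 0 <= f (fst z) <= 1 /\ (snd z = true -> f (fst z) < eta))
      by (intros; apply Hl; right; auto).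
    change (map fst ((y, t) :: r)) with (y :: map fst r). rewrite pvar_cons2.
    destruct tag, t.
    +
      destruct (Ht1 eq_refl) as [Hxe HlQ]. subst lastQ.
      rewrite ?Ps_cP, ?Ps_cQ, ?Qs_cP, ?Qs_cQ. rewrite pvs_some_cons.
      specialize (IH y true lastP (Some y) Hr (proj1 Hy)
        (fun _ => conj (proj2 Hy eq_refl) eq_refl) (fun H => ltac:(discriminate)) HP
        (fun q Hq => ltac:(injection Hq; intros; subst; split; [apply Hy| apply Hy; reflexivity]))).
      destruct lastP; simpl cred in *; lra.
    +
      destruct (Ht1 eq_refl) as [Hxe HlQ]. subst lastQ.
      rewrite ?Ps_cP, ?Ps_cQ, ?Qs_cP, ?Qs_cQ. cbn [length]. rewrite S_INR.
      specialize (IH y false (Some y) (Some x) Hr (proj1 Hy)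
        (fun H => ltac:(discriminate)) (fun _ => eq_refl)
        (fun a Ha => ltac:(injection Ha; intros; subst; apply Hy))
        HQ).
      destruct lastP as [a|].
      * rewrite pvs_some_cons. simpl cred.
        pose proof (HE2 p eta (f a) (f y) (f x) Hp He (HP a eq_refl) (proj1 Hy) (HQ x eq_refl)).
        simpl cred in IH. lra.
      * simpl cred in *. change (pvs f p None (y :: Ps r)) with (pvs f p (Some y) (Ps r)).
        pose proof (rpow_nonneg (Rabs (f y - f x)) p). lra.
    +
      rewrite (Ht2 eq_refl) in *. 
      rewrite ?Ps_cP, ?Ps_cQ, ?Qs_cP, ?Qs_cQ.
      specialize (IH y true (Some x) (Some y) Hr (proj1 Hy)
        (fun _ => conj (proj2 Hy eq_refl) eq_refl) (fun H => ltac:(discriminate))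
        (fun a Ha => ltac:(injection Ha; intros; subst; apply Hx))
        (fun q Hq => ltac:(injection Hq; intros; subst; split; [apply Hy| apply Hy; reflexivity]))).
      simpl cred in *.
      pose proof (HE3 p eta (f x) (f y) Hp (conj (proj1 (proj1 Hy)) (proj2 Hy eq_refl))).
      destruct lastQ as [q|].
      * rewrite pvs_some_cons.
        pose proof (HQ q eq_refl).
        pose proof (HE1 p eta (f q) (f y) Hp He H0 (conj (proj1 (proj1 Hy)) (proj2 Hy eq_refl))).
        lra.
      * change (pvs f p None (y :: Qs r)) with (pvs f p (Some y) (Qs r)). lra.
    +
      rewrite (Ht2 eq_refl) in *.
      rewrite ?Ps_cP, ?Ps_cQ, ?Qs_cP, ?Qs_cQ. cbn [length]. rewrite S_INR.
      rewrite pvs_some_cons.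
      specialize (IH y false (Some y) lastQ Hr (proj1 Hy)
        (fun H => ltac:(discriminate)) (fun _ => eq_refl)
        (fun a Ha => ltac:(injection Ha; intros; subst; apply Hy)) HQ).
      simpl cred in *. lra.
Qed.

Lemma lt_le_sorted l : Sorted Rlt l -> StronglySorted Rle l.
Proof.
  intro H. apply Sorted_StronglySorted. { intros x y z; lra. }
  induction H; constructor; auto. destruct H0; constructor; lra.
Qed.

Lemma ss_lt l : Sorted Rlt l -> StronglySorted Rlt l.
Proof. apply Sorted_StronglySorted. intros x y z; lra. Qed.

Lemma merge_ex : forall P, StronglySorted Rle P -> forall Q, StronglySorted Rle Q ->
  exists l, StronglySorted Rle (map fst l) /\ Ps l = P /\ Qs l = Q /\
   (forall z, In z l -> (snd z = false /\ In (fst z) P) \/ (snd z = true /\ In (fst z) Q)).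
Proof.
  induction P as [|a P' IHP]; intros HP Q HQ.
  - induction Q as [|b Q' IHQ].
    + exists []; split; [constructor| split; [reflexivity| split; [reflexivity| intros z []]]].
    + apply StronglySorted_inv in HQ as [HQ' HbQ].
      destruct (IHQ HQ') as [l1 [S1 [E1 [E2 M1]]]].
      exists ((b,true)::l1). rewrite Ps_cQ, Qs_cQ. repeat split; try congruence.
      * simpl. constructor; auto. apply Forall_forall. intros x Hx.
        apply in_map_iff in Hx as [z [<- Hz]]. destruct (M1 z Hz) as [[_ []]|[_ Hq]].
        rewrite Forall_forall in HbQ. auto.
      * intros z [<-|Hz]; [right; simpl; auto|]. destruct (M1 z Hz) as [[_ []]|[? ?]].
        right; split; auto; right; auto.
  - apply StronglySorted_inv in HP as [HP' HaP].
    rewrite Forall_forall in HaP.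
    induction Q as [|b Q' IHQ].
    + destruct (IHP HP' [] HQ) as [l1 [S1 [E1 [E2 M1]]]].
      exists ((a,false)::l1). rewrite Ps_cP, Qs_cP. repeat split; try congruence.
      * simpl. constructor; auto. apply Forall_forall. intros x Hx.
        apply in_map_iff in Hx as [z [<- Hz]]. destruct (M1 z Hz) as [[_ Hp]|[_ []]]. auto.
      * intros z [<-|Hz]; [left; simpl; auto|]. destruct (M1 z Hz) as [[? ?]|[_ []]].
        left; split; auto; right; auto.
    + pose proof HQ as HQ0. apply StronglySorted_inv in HQ as [HQ' HbQ].
      rewrite Forall_forall in HbQ.
      destruct (Rle_dec a b) as [Hab|Hab].
      * destruct (IHP HP' (b::Q') HQ0) as [l1 [S1 [E1 [E2 M1]]]].
        exists ((a,false)::l1). rewrite Ps_cP, Qs_cP. repeat split; try congruence.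
        -- simpl. constructor; auto. apply Forall_forall. intros x Hx.
           apply in_map_iff in Hx as [z [<- Hz]]. destruct (M1 z Hz) as [[_ Hp]|[_ Hq]]. auto.
           destruct Hq as [<-|Hq]; auto. pose proof (HbQ _ Hq); lra.
        -- intros z [<-|Hz]; [left; simpl; auto|]. destruct (M1 z Hz) as [[? ?]|[? ?]].
           left; split; auto; right; auto. right; auto.
      * apply Rnot_le_lt in Hab.
        destruct (IHQ HQ') as [l1 [S1 [E1 [E2 M1]]]].
        exists ((b,true)::l1). rewrite Ps_cQ, Qs_cQ. repeat split; try congruence.
        -- simpl. constructor; auto. apply Forall_forall. intros x Hx.
           apply in_map_iff in Hx as [z [<- Hz]]. destruct (M1 z Hz) as [[_ Hp]|[_ Hq]].
           destruct Hp as [<-|Hp]; [lra|]. pose proof (HaP _ Hp); lra. auto.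
        -- intros z [<-|Hz]; [right; simpl; auto|]. destruct (M1 z Hz) as [[? ?]|[? ?]].
           left; auto. right; split; auto; right; auto.
Qed.

Lemma dedup_ex f p : forall l, StronglySorted Rle l -> exists l', Sorted Rlt l' /\
  (forall x, In x l' <-> In x l) /\ pvar_sum f p l' = pvar_sum f p l /\ hd 0 l' = hd 0 l.
Proof.
  induction l as [|a r IH]; intros H.
  - exists []. repeat split; auto.
  - apply StronglySorted_inv in H as [Hr Har].
    destruct (IH Hr) as [r' [S' [I' [P' H']]]].
    destruct r as [|c r0].
    + exists [a]. repeat split; auto.
    + inversion Har; subst.
      destruct r' as [|d r''].
      { exfalso. apply (proj2 (I' c)). left; auto. }
      simpl in H'. subst d.
      destruct H1 as [Hlt|Heq].
      * exists (a :: c :: r''). repeat split.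
        -- apply Sorted_cons; [exact S' | apply HdRel_cons; exact Hlt].
        -- intros [<-|Hx]; [left; auto| right; apply I'; auto].
        -- intros [<-|Hx]; [left; auto| right; apply I'; auto].
        -- rewrite !pvar_cons2, <- P'. reflexivity.
      * subst c. exists (a :: r''). repeat split; auto.
        -- intro Hx. right. apply I'; auto.
        -- intros [<-|Hx]; [left; auto| apply I'; auto].
        -- rewrite pvar_cons2, <- P', Rminus_diag, Rabs_R0, rpow_0. lra.
Qed.

Lemma hd_min l : Sorted Rlt l -> Forall (fun x => 0 <= x) l -> In 0 l -> hd 1 l = 0.
Proof.
  intros S F I. destruct l as [|a r]; [destruct I|].
  apply ss_lt in S. apply StronglySorted_inv in S as [_ Ha]. rewrite Forall_forall in Ha.
  inversion F; subst. simpl. destruct I as [->|I]; auto. pose proof (Ha _ I). lra.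
Qed.

Lemma last_max l : StronglySorted Rlt l -> forall x, In x l -> x <= last l 0.
Proof.
  induction l as [|a r IH]; intros S x I; [destruct I|].
  apply StronglySorted_inv in S as [Sr Ha]. rewrite Forall_forall in Ha.
  destruct r as [|b r0].
  - destruct I as [<-|[]]; simpl; lra.
  - change (last (a :: b :: r0) 0) with (last (b :: r0) 0).
    destruct I as [<-|I].
    + pose proof (Ha b (or_introl eq_refl)). pose proof (IH Sr b (or_introl eq_refl)). lra.
    + apply IH; auto.
Qed.

Lemma last_in l : l <> [] -> In (last l 0) l.
Proof.
  induction l as [|a r IH]; intros H; [congruence|].
  destruct r as [|b r0]; [left; auto|].
  change (last (a :: b :: r0) 0) with (last (b :: r0) 0). right. apply IH. congruence.
Qed.

Lemma last_is1 l : Sorted Rlt l -> Forall (fun x => x <= 1) l -> In 1 l -> last l 0 = 1.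
Proof.
  intros S F I. pose proof (last_max l (ss_lt l S) 1 I).
  assert (l <> []) by (intro; subst; destruct I).
  pose proof (last_in l H0). rewrite Forall_forall in F. pose proof (F _ H1). lra.
Qed.

Lemma part_in01 P : is_partition01 P -> forall x, In x P -> 0 <= x <= 1.
Proof.
  intros [Hl [S [Hh Hla]]] x I. split.
  - destruct P as [|a r]; [destruct I|]. simpl in Hh; subst a.
    apply ss_lt in S. apply StronglySorted_inv in S as [_ Ha]. rewrite Forall_forall in Ha.
    destruct I as [<-|I]; [lra|]. pose proof (Ha _ I); lra.
  - rewrite <- Hla. apply last_max; auto. apply ss_lt; auto.
Qed.

Lemma part_has P : is_partition01 P -> In 0 P /\ In 1 P.
Proof.
  intros [Hl [S [Hh Hla]]]. destruct P as [|a r]; [simpl in Hl; lia|]. split.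
  - simpl in Hh; subst; left; auto.
  - rewrite <- Hla. apply last_in. congruence.
Qed.

Lemma final_step S eps p : 1 <= p -> 0 < eps -> 0 <= S < Rpower eps p -> rpow S (1 / p) < eps.
Proof.
  intros Hp He [[HS|HS] HSl].
  - rewrite rpow_pos by lra. unfold Rpower in *.
    assert (ln S < p * ln eps) by (rewrite <- (ln_exp (p * ln eps)); apply ln_increasing; auto).
    rewrite <- (exp_ln eps) by lra. apply exp_increasing.
    assert (0 < 1 / p) by (apply Rdiv_lt_0_compat; lra).
    replace (ln eps) with (1 / p * (p * ln eps)) by (field; lra).
    apply Rmult_lt_compat_l; auto.
  - subst. rewrite rpow_0. lra.
Qed.

Theorem lemma3p4 (p : R) (f : R -> R) :
  1 <= p -> BV_p p f ->
  (forall x, 0 <= x <= 1 -> 0 <= f x <= 1) ->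
  forall eps : R, 0 < eps ->
  exists eta : R, 0 < eta /\
    forall xs : list R,
      Sorted Rlt xs ->
      Forall (fun x => 0 <= x <= 1) xs ->
      Forall (fun x => f x < eta) xs ->
      rpow (pvar_sum f p xs) (1 / p) < eps.
Proof.
  intros Hp [M HM] Hf eps Heps.
  set (ES := fun v => exists l, is_partition01 l /\ v = pvar_sum f p l).
  assert (Hb : bound ES) by (exists M; intros v [l [Hl ->]]; apply HM; auto).
  assert (Hpart01 : is_partition01 [0; 1]).
  { repeat split; simpl; auto. repeat constructor; lra. }
  assert (Hne : exists v, ES v) by (exists (pvar_sum f p [0;1]); exists [0;1]; auto).
  destruct (completeness ES Hb Hne) as [V [HVub HVlub]].
  set (d := Rpower eps p).
  assert (Hd : 0 < d) by (unfold d, Rpower; apply exp_pos).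
  assert (HP : exists P, is_partition01 P /\ V - d / 2 < pvar_sum f p P).
  { destruct (classic (exists P, is_partition01 P /\ V - d / 2 < pvar_sum f p P)) as [H|H]; auto.
    exfalso. assert (V <= V - d / 2); [|lra]. apply HVlub. intros v [l [Hl ->]].
    destruct (Rle_dec (pvar_sum f p l) (V - d / 2)); auto. exfalso; apply H. exists l.
    split; auto. lra. }
  destruct HP as [P [HPp HPv]].
  set (n := INR (length P)).
  assert (Hn : 0 <= n) by apply pos_INR.
  set (eta := Rmin 1 (d / (4 * (2 * n + 2) * (p + 1)))).
  assert (Hpos : 0 < d / (4 * (2 * n + 2) * (p + 1))).
  { apply Rdiv_lt_0_compat; auto. nra. }
  assert (He : 0 < eta <= 1).
  { unfold eta; split; [apply Rmin_glb_lt; lra| apply Rmin_l]. }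
  assert (Hbud : (2 * n + 2) * (p * eta + eta) <= d / 4).
  { assert (eta <= d / (4 * (2 * n + 2) * (p + 1))) by apply Rmin_r.
    apply (Rmult_le_compat_l ((2 * n + 2) * (p + 1))) in H; [|nra].
    replace ((2 * n + 2) * (p + 1) * (d / (4 * (2 * n + 2) * (p + 1)))) with (d / 4) in H
      by (field; split; lra).
    nra. }
  exists eta. split; [lra|].
  intros Q HQs HQ01 HQeta.
  apply final_step; auto. split; [apply pvar_nonneg|].
  destruct (Rlt_le_dec (pvar_sum f p Q) d) as [Hlt|Hge]; auto. exfalso.
  destruct (merge_ex P (lt_le_sorted P (proj1 (proj2 HPp))) Q (lt_le_sorted Q HQs))
    as [l [Sl [EP [EQ Ml]]]].
  rewrite Forall_forall in HQ01, HQeta.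
  assert (Hl : forall z, In z l -> 0 <= f (fst z) <= 1 /\ (snd z = true -> f (fst z) < eta)).
  { intros z Hz. destruct (Ml z Hz) as [[Ht Hin]|[Ht Hin]].
    - split. apply Hf, (part_in01 P HPp); auto. congruence.
    - split. apply Hf, HQ01; auto. intros _. apply HQeta; auto. }
  assert (Hmain : pvar_sum f p P + pvar_sum f p Q <= pvar_sum f p (map fst l) + d / 4).
  { destruct l as [|[x t] r].
    { exfalso. simpl in EP. subst P. destruct HPp as [Hlen _]. simpl in Hlen. lia. }
    assert (Hr : forall z, In z r -> 0 <= f (fst z) <= 1 /\ (snd z = true -> f (fst z) < eta))
      by (intros; apply Hl; right; auto).
    assert (Hx := Hl (x, t) (or_introl eq_refl)). simpl in Hx.
    change (map fst ((x, t) :: r)) with (x :: map fst r).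
    destruct t.
    - rewrite Ps_cQ in EP. rewrite Qs_cQ in EQ.
      pose proof (inv_main f p eta Hp He r x true None (Some x) Hr (proj1 Hx)
        (fun _ => conj (proj2 Hx eq_refl) eq_refl) (fun H => ltac:(discriminate))
        (fun a Ha => ltac:(discriminate))
        (fun q Hq => ltac:(injection Hq; intros; subst; split; [apply Hx| apply Hx; reflexivity]))).
      simpl cred in H. rewrite EP in H.
      change (pvs f p None P) with (pvar_sum f p P) in H.
      change (pvs f p (Some x) (Qs r)) with (pvar_sum f p (x :: Qs r)) in H. rewrite <- EQ.
      fold n in H. assert (0 <= p * eta + eta) by nra. nra.
    - rewrite Ps_cP in EP. rewrite Qs_cP in EQ.
      pose proof (inv_main f p eta Hp He r x false (Some x) None Hr (proj1 Hx)
        (fun H => ltac:(discriminate)) (fun _ => eq_refl)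
        (fun a Ha => ltac:(injection Ha; intros; subst; apply Hx))
        (fun q Hq => ltac:(discriminate))).
      simpl cred in H. rewrite EQ in H.
      change (pvs f p None Q) with (pvar_sum f p Q) in H.
      change (pvs f p (Some x) (Ps r)) with (pvar_sum f p (x :: Ps r)) in H. rewrite <- EP.
      unfold n in Hbud. rewrite <- EP in Hbud. cbn [length] in Hbud. rewrite S_INR in Hbud.
      nra. }
  destruct (dedup_ex f p (map fst l) Sl) as [l' [S' [I' [P' _]]]].
  assert (Hin' : forall x, In x l' -> 0 <= x <= 1).
  { intros x Hx. apply I' in Hx. apply in_map_iff in Hx as [z [<- Hz]].
    destruct (Ml z Hz) as [[_ Hin]|[_ Hin]]. apply (part_in01 P HPp); auto. apply HQ01; auto. }
  destruct (part_has P HPp) as [H0 H1].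
  assert (In 0 l' /\ In 1 l') as [I0 I1].
  { split; apply I'; apply in_map_iff.
    - exists (0, false). split; auto. rewrite <- EP in H0. unfold Ps in H0.
      apply in_map_iff in H0 as [z [Hz1 Hz2]]. apply filter_In in Hz2 as [Hz2 Hz3].
      destruct z as [z b]; simpl in *; subst. destruct b; simpl in Hz3; try discriminate. auto.
    - exists (1, false). split; auto. rewrite <- EP in H1. unfold Ps in H1.
      apply in_map_iff in H1 as [z [Hz1 Hz2]]. apply filter_In in Hz2 as [Hz2 Hz3].
      destruct z as [z b]; simpl in *; subst. destruct b; simpl in Hz3; try discriminate. auto. }
  assert (Hpl' : is_partition01 l').
  { split; [|split; [auto|split]].
    - destruct l' as [|a [|b r]]; [destruct I0| |simpl; lia].
      destruct I0 as [Ha|[]]; destruct I1 as [Hc|[]]; lra.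
    - apply hd_min; auto. apply Forall_forall; intros; apply Hin'; auto.
    - apply last_is1; auto. apply Forall_forall; intros; apply Hin'; auto. }
  assert (pvar_sum f p l' <= V) by (apply HVub; exists l'; auto).
  lra.
Qed.
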